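(* Let $K$ be a skew field, and let $D=(y_i^k)_{i,k\ge0}$ be an infinite matrix over $K$ (entry $y_i^k$ in row $k$, column $i$) which is generic. For $n\ge0$ let $D_n$ be the $(n+1)\times(n+1)$ matrix with entry $y_i^k$ in row $k$, column $i$, $0\le i,k\le n$, and let $(z_k^i)_n$ denote the entry in row $i$, column $k$ of $D_n^{-1}$, so that $(z_k^i)_n=(|D_n|_i^k)^{-1}$. Then for $0\le i,k\le n$, $$(z_k^i)_n=\sum_{m=\max(i,k)}^n\big(|D_m|_i^m\big)^{-1}\,|D_m|_m^m\,\big(|D_m|_m^k\big)^{-1}.$$
   Context: Quasideterminants: for a square matrix $M$ over $K$ with rows and columns indexed by $\{0,\ldots,n\}$, let $M_a^b$ denote its entry in row $b$, column $a$; the quasideterminant $|M|_a^b=M_a^b-r\,(M^{(b,a)})^{-1}c$, where $M^{(b,a)}$ is $M$ with row $b$ and column $a$ deleted, $r$ is row $b$ of $M$ with its column-$a$ entry deleted, and $c$ is column $a$ of $M$ with its row-$b$ entry deleted (for a $1\times1$ matrix, $|M|_0^0=M_0^0$). When $M$ is invertible, $|M|_a^b$ is the inverse of the entry of $M^{-1}$ in row $a$, column $b$; in the commutative case $|M|_a^b=(-1)^{a+b}\det M/\det M^{(b,a)}$. Genericity means all matrices and quasideterminants appearing are defined and invertible. *)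

(* Defs.v *)
From HB Require Import structures.
From mathcomp Require Import all_boot all_order all_algebra.
From Stdlib Require Import ClassicalEpsilon.
Set Implicit Arguments. Unset Strict Implicit. Unset Printing Implicit Defensive.
Import GRing.Theory.
Local Open Scope ring_scope.

Definition skew_field (K : unitRingType) : Prop :=
  forall x : K, x != 0 -> x \is a GRing.unit.

Definition mx_inverse (K : unitRingType) n (M N : 'M[K]_n) : Prop :=
  M *m N = 1%:M /\ N *m M = 1%:M.

Definition mx_invertible (K : unitRingType) n (M : 'M[K]_n) : Prop :=
  exists N, mx_inverse M N.

(* The inverse (chosen; it is unique when it exists). *)
Definition mxinv (K : unitRingType) n (M : 'M[K]_n) : 'M[K]_n :=
  epsilon (inhabits 0) (fun N => mx_inverse M N).

Definition mxdel (K : unitRingType) n (M : 'M[K]_n.+1) (b a : 'I_n.+1) : 'M[K]_n :=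
  \matrix_(i, j) M (lift b i) (lift a j).

(* Quasideterminant |M|_a^b (a = column index, b = row index):
   M_a^b - r (M^{(b,a)})^{-1} c. *)
Definition qdet (K : unitRingType) n (M : 'M[K]_n.+1) (a b : 'I_n.+1) : K :=
  let r : 'rV[K]_n := \row_j M b (lift a j) in
  let c : 'cV[K]_n := \col_i M (lift b i) a in
  M b a - (r *m mxinv (mxdel M b a) *m c) 0 0.

(* D_n: entry D k i (= y_i^k) in row k, column i, for 0 <= i,k <= n. *)
Definition Dmx (K : unitRingType) (D : nat -> nat -> K) n : 'M[K]_n.+1 :=
  \matrix_(k < n.+1, i < n.+1) D k i.

Definition generic (K : unitRingType) (D : nat -> nat -> K) : Prop :=
  forall n, mx_invertible (Dmx D n) /\
    forall a b : 'I_n.+1,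
      mx_invertible (mxdel (Dmx D n) b a) /\ qdet (Dmx D n) a b \is a GRing.unit.

(* Main.v *)
Require Import Defs.
From HB Require Import structures.
From mathcomp Require Import all_boot all_order all_algebra.
From mathcomp Require Import zify.
From Stdlib Require Import ClassicalEpsilon.
Import GRing.Theory.
Local Open Scope ring_scope.

Section S.
Variable K : unitRingType.

Lemma mxinvP n (M : 'M[K]_n) : mx_invertible M -> mx_inverse M (mxinv M).
Proof.
rewrite /mxinv => -[N HN].
exact: (epsilon_spec (inhabits 0) (fun N => mx_inverse M N) (ex_intro _ N HN)).
Qed.

Lemma split_fact n (M Z : 'M[K]_n.+1) (a b : 'I_n.+1) (i : 'I_n) j :
  M *m Z = 1%:M ->
  \sum_l mxdel M b a i l * Z (lift a l) j + M (lift b i) a * Z a j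
   = (lift b i == j)%:R.
Proof.
move=> MZ; have := congr1 (fun A : 'M[K]_n.+1 => A (lift b i) j) MZ.
rewrite !mxE (bigD1_ord a) //= addrC => <-; congr (_ + _).
by apply: eq_bigr => l _; rewrite mxE.
Qed.

Lemma col_fact n (M Z : 'M[K]_n.+1) (a b : 'I_n.+1) :
  M *m Z = 1%:M ->
  mxdel M b a *m (\col_l Z (lift a l) b) =
  - ((\col_i M (lift b i) a) *m (Z a b)%:M).
Proof.
move=> MZ; apply/matrixP => i k; rewrite ord1 !mxE big_ord1 !mxE eqxx mulr1n.
apply/eqP; rewrite -subr_eq0 opprK; apply/eqP.
have := split_fact _ _ _ a b i b MZ; rewrite eq_sym (negbTE (neq_lift _ _)) => E.
rewrite -[RHS]E; congr (_ + _); apply: eq_bigr => l _; rewrite !mxE //.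
Qed.

Lemma qdet_mulZ n (M Z : 'M[K]_n.+1) (a b : 'I_n.+1) :
  M *m Z = 1%:M -> mxinv (mxdel M b a) *m mxdel M b a = 1%:M ->
  qdet M a b * Z a b = 1.
Proof.
move=> MZ NiN.
set N := mxdel M b a; set Ni := mxinv N.
set zc := \col_l Z (lift a l) b; set c := \col_i M (lift b i) a.
set r := \row_j M b (lift a j).
have hz : zc = - (Ni *m c *m (Z a b)%:M).
  by rewrite -mulmxA -mulmxN -col_fact // mulmxA NiN mul1mx.
have := congr1 (fun A : 'M[K]_n.+1 => A b b) MZ.
rewrite !mxE eqxx mulr1n (bigD1_ord a) //= => <-.
rewrite /qdet -/N -/Ni -/r -/c mulrBl; congr (_ + _).
have -> : (r *m Ni *m c) 0 0 * Z a b = (r *m Ni *m c *m (Z a b)%:M) 0 0.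
  by rewrite [RHS]mxE big_ord1 !mxE eqxx mulr1n.
rewrite (_ : r *m Ni *m c *m (Z a b)%:M = - (r *m zc)); last first.
  by rewrite hz mulmxN opprK !mulmxA.
rewrite !mxE opprK.
by apply: eq_bigr => l _; rewrite !mxE.
Qed.

Lemma schur n (M Z : 'M[K]_n.+1) (a b : 'I_n.+1) :
  M *m Z = 1%:M -> mxinv (mxdel M b a) *m mxdel M b a = 1%:M ->
  Z a b \is a GRing.unit -> forall i j,
  mxinv (mxdel M b a) i j =
  Z (lift a i) (lift b j) - Z (lift a i) b * (Z a b)^-1 * Z a (lift b j).
Proof.
move=> MZ NiN tU i j.
set N := mxdel M b a; set Ni := mxinv N.
set zc := \col_l Z (lift a l) b; set c := \col_i M (lift b i) a.
set Z' := \matrix_(i, j) Z (lift a i) (lift b j).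
set zr := \row_j Z a (lift b j).
set t := Z a b.
have h1 : N *m Z' = 1%:M - c *m zr.
  apply/matrixP => i' j'.
  have := split_fact _ _ _ a b i' (lift b j') MZ.
  rewrite (inj_eq lift_inj) => E.
  rewrite !mxE big_ord1 !mxE -E addrK.
  by apply: eq_bigr => l _; rewrite !mxE.
have hc : c = - (N *m zc *m (t^-1)%:M).
  rewrite col_fact // mulNmx opprK -mulmxA -scalar_mxM divrr //.
  by rewrite mulmx1.
have h2 : Z' = Ni + zc *m (t^-1)%:M *m zr.
  rewrite -[Z' in LHS]mul1mx -NiN -(mulmxA Ni) h1 mulmxBr mulmx1 hc mulNmx mulmxN opprK.
  by rewrite !mulmxA NiN mul1mx.
have := congr1 (fun A : 'M[K]_n => A i j) h2.
rewrite !mxE big_ord1 !mxE big_ord1 !mxE eqxx mulr1n => ->.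
by rewrite addrK.
Qed.

End S.
Arguments qdet_mulZ {K n M Z a b}.
Arguments schur {K n M Z a b}.

Theorem theorem6 (K : unitRingType) (hK : skew_field K)
  (D : nat -> nat -> K) (hD : generic D) (n i k : nat)
  (hi : (i <= n)%N) (hk : (k <= n)%N) :
  mxinv (Dmx D n) (inord i) (inord k) =
  \sum_(maxn i k <= m < n.+1)
     (qdet (Dmx D m) (inord i) (inord m))^-1 * qdet (Dmx D m) (inord m) (inord m)
       * (qdet (Dmx D m) (inord m) (inord k))^-1.
Proof.
pose z m i k : K := mxinv (Dmx D m) (@inord m i) (@inord m k).
have ZP m : Dmx D m *m mxinv (Dmx D m) = 1%:M.
  by have [/mxinvP [] ] := hD m.
have qinv m a b : (qdet (Dmx D m) a b)^-1 = mxinv (Dmx D m) a b.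
  have [_ /(_ a b) [/mxinvP [_ NiN] qU]] := hD m.
  have := qdet_mulZ (ZP m) NiN => E.
  by rewrite -[RHS](mulKr qU) E mulr1.
have zU m a b : mxinv (Dmx D m) a b \is a GRing.unit.
  by rewrite -qinv unitrV; have [_ /(_ a b) []] := hD m.
have qE m a b : qdet (Dmx D m) a b = (mxinv (Dmx D m) a b)^-1.
  by rewrite -qinv invrK.
have delE m : mxdel (Dmx D m.+1) ord_max ord_max = Dmx D m.
  apply/matrixP => a b; have ha : (a <= m)%N := ltn_ord a; have hb : (b <= m)%N := ltn_ord b.
  by rewrite !mxE /= /bump !ltnNge ha hb.
have liftE m a : (a <= m)%N -> lift ord_max (@inord m a) = @inord m.+1 a.
  move=> am; apply: val_inj; rewrite /= /bump ltnNge !inordK //; lia.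
have step m a b : (a <= m)%N -> (b <= m)%N ->
    z m a b = z m.+1 a b - z m.+1 a m.+1 * (z m.+1 m.+1 m.+1)^-1 * z m.+1 m.+1 b.
  move=> am bm.
  have [/mxinvP [_ NiN] _] := hD m.
  rewrite -(delE m) in NiN.
  have := schur (ZP m.+1) NiN (zU m.+1 ord_max ord_max) (inord a) (inord b).
  rewrite delE /z => ->; rewrite !liftE //.
  by have -> : (ord_max : 'I_m.+2) = inord m.+1 by apply: val_inj; rewrite /= inordK.
rewrite (eq_bigr (fun m => z m i m * (z m m m)^-1 * z m m k)); last first.
  by move=> m _; rewrite !qinv qE.
change (z n i k = \sum_(maxn i k <= m < n.+1) z m i m * (z m m m)^-1 * z m m k).
elim: n i k hi hk => [|n IH] i k hi hk.
  have -> : i = 0%N by lia.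
  have -> : k = 0%N by lia.
  by rewrite big_nat1 divrK // zU.
have [hm|hm] := leqP (maxn i k) n.
  have hi' : (i <= n)%N by lia.
  have hk' : (k <= n)%N by lia.
  rewrite big_nat_recr /=; last by lia.
  by rewrite -IH // (step n i k) // subrK.
have -> : maxn i k = n.+1 by lia.
rewrite big_nat1.
have [->|hin] := eqVneq i n.+1.
  by rewrite divrr ?mul1r // zU.
have -> : k = n.+1 by lia.
by rewrite divrK // zU.
Qed.
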